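(* Let $n\in\mathbb{R}_+^I$. Consider the problem: minimize $\beta(m)$ subject to $\sum_{j\in i}m_{ji}=n_i$ for $i\in\mathcal{I}$, over $m_{ji}\ge0$ ($i\in\mathcal{I}$, $j\in i$). Its Lagrange dual (with multipliers $\lambda\in\mathbb{R}^I$ for the equality constraints, after substituting $\Lambda_i=e^{\lambda_i}$) is the problem $$\text{maximize}\ \sum_{i\in\mathcal{I}}n_i\log\Lambda_i\quad\text{subject to}\quad\sum_{i: j\in i}\frac{\Lambda_i}{\mu_{ji}}\le1\ \ (j\in\mathcal{J})\quad\text{over}\ \Lambda_i\ge0,\ i\in\mathcal{I}.$$
   Context: Finite set of queues $\mathcal{J}$, finite set of routes $\mathcal{I}$ ($I=|\mathcal{I}|$), each route a subset of $\mathcal{J}$, rates $\mu_{ji}>0$ for $j\in i$. For $m=(m_{ji}: j\in i)\ge0$ with $m_j=\sum_{i: j\in i}m_{ji}$, $\beta(m)=\sum_{j\in\mathcal{J}}\sum_{i: j\in i,\,m_{ji}>0}m_{ji}\log\frac{m_{ji}\mu_{ji}}{m_j}$. *)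

(* Defs.v *)
From HB Require Import structures.
From mathcomp Require Import all_boot all_order all_algebra.
From mathcomp Require Import all_classical all_reals all_analysis.
Set Implicit Arguments. Unset Strict Implicit. Unset Printing Implicit Defensive.
Import Order.TTheory GRing.Theory Num.Theory.
Local Open Scope ring_scope.

(* Queues: J : finType.  Routes: I : finType, route i is the subset r i of J.
   An allocation m : J -> I -> R; only the entries m j i with j \in r i matter. *)

Section Defs.
Context {R : realType} {J I : finType} (r : I -> {set J}).

Definition mtot (m : J -> I -> R) (j : J) : R :=
  \sum_(i | j \in r i) m j i.

Definition beta (mu : J -> I -> R) (m : J -> I -> R) : R :=
  \sum_j \sum_(i | (j \in r i) && (0 < m j i))
      m j i * ln (m j i * mu j i / mtot m j).

Definition lagrangian (mu : J -> I -> R) (n : I -> R) (lam : I -> R)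
    (m : J -> I -> R) : R :=
  beta mu m + \sum_i lam i * (n i - \sum_(j in r i) m j i).

Definition dual_fun (mu : J -> I -> R) (n : I -> R) (lam : I -> R) : \bar R :=
  ereal_inf [set (lagrangian mu n lam m)%:E |
               m in [set m : J -> I -> R | forall j i, j \in r i -> 0 <= m j i]].

Definition dual_feasible (mu : J -> I -> R) (Lam : I -> R) : Prop :=
  (forall i, 0 <= Lam i) /\ forall j, \sum_(i | j \in r i) Lam i / mu j i <= 1.

Definition dual_objective (n : I -> R) (Lam : I -> R) : \bar R :=
  (\sum_i (n i)%:E * (if Lam i == 0%R then -oo else (ln (Lam i))%:E))%E.
End Defs.

(* Main.v *)
Require Import Defs.
From HB Require Import structures.
From mathcomp Require Import all_boot all_order all_algebra.
From mathcomp Require Import all_classical all_reals all_analysis.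
From mathcomp Require Import ring lra.
Import Order.TTheory GRing.Theory Num.Theory.
Local Open Scope ring_scope.

Section L.
Variables (R : realType) (J I : finType) (r : I -> {set J}) (mu : J -> I -> R) (n : I -> R).

Definition gg (lam : I -> R) (m : J -> I -> R) j i : R :=
  (if 0 < m j i then m j i * ln (m j i * mu j i / mtot r m j) else 0) - lam i * m j i.

Lemma lag_eq lam m : lagrangian r mu n lam m =
  \sum_i lam i * n i + \sum_j \sum_(i | j \in r i) gg lam m j i.
Proof.
rewrite /lagrangian /beta /gg.
have -> : \sum_i lam i * (n i - \sum_(j in r i) m j i) =
   \sum_i lam i * n i - \sum_j \sum_(i | j \in r i) lam i * m j i.
  under eq_bigr => i _ do rewrite mulrBr mulr_sumr.
  rewrite sumrB; congr (_ - _).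
  by rewrite (exchange_big_dep xpredT) //=.
rewrite addrCA; congr (_ + _).
rewrite -sumrB; apply: eq_bigr => j _.
by rewrite sumrB big_mkcondr.
Qed.

Lemma ln_le_sub1 (x : R) : 0 < x -> ln x <= x - 1.
Proof.
move=> x0; have := expR_ge1Dx (ln x); rewrite lnK ?posrE //.
by rewrite lerBrDl.
Qed.

Lemma gg_lb lam m j i : j \in r i -> 0 < mu j i ->
  (forall i, j \in r i -> 0 <= m j i) ->
  m j i - mtot r m j * (expR (lam i) / mu j i) <= gg lam m j i.
Proof.
move=> ji mu0 mge; rewrite /gg.
have Mge : m j i <= mtot r m j.
  rewrite /mtot (bigD1 i) //= lerDl; apply: sumr_ge0 => k /andP[? _]; exact: mge.
have L0 : 0 < expR (lam i) := expR_gt0 _.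
case: ifP => mp.
  have M0 : 0 < mtot r m j by apply: lt_le_trans Mge.
  set y := m j i * mu j i / mtot r m j.
  have y0 : 0 < y by rewrite /y divr_gt0 ?mulr_gt0.
  have H := ln_le_sub1 _ (divr_gt0 L0 y0).
  rewrite lnM ?posrE ?invr_gt0 // lnV ?posrE // expRK in H.
  have E : mtot r m j * (expR (lam i) / mu j i) = m j i * (expR (lam i) / y).
    rewrite /y; field; rewrite ?gt_eqF //.
  rewrite E; move: H mp; set a := ln y; set b := expR (lam i) / y; nra.

have m0 : m j i = 0 by apply/eqP; rewrite eq_le mge // andbT leNgt mp.
have : 0 <= mtot r m j * (expR (lam i) / mu j i).
  apply: mulr_ge0; last by rewrite divr_ge0 // ltW.
  apply: sumr_ge0 => k; exact: mge.
rewrite m0 mulr0; lra.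
Qed.

Hypothesis mu_pos : forall j i, j \in r i -> 0 < mu j i.

Lemma sum_gg_ge0 lam m j :
  (\sum_(i | j \in r i) expR (lam i) / mu j i <= 1) ->
  (forall i, j \in r i -> 0 <= m j i) ->
  0 <= \sum_(i | j \in r i) gg lam m j i.
Proof.
move=> feas mge.
have H : \sum_(i | j \in r i) (m j i - mtot r m j * (expR (lam i) / mu j i))
   <= \sum_(i | j \in r i) gg lam m j i.
  by apply: ler_sum => i ji; apply: gg_lb => //; exact: mu_pos.
apply: le_trans H.
rewrite sumrB -mulr_sumr -/(mtot r m j).
rewrite -[X in 0 <= X - _]mulr1 -mulrBr; apply: mulr_ge0.
  apply: sumr_ge0 => k; exact: mge.
by rewrite subr_ge0.
Qed.

Definition adm (m : J -> I -> R) := forall j i, j \in r i -> 0 <= m j i.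

Lemma dual_feas lam : dual_feasible r mu (fun i => expR (lam i)) ->
  dual_fun r mu n lam = (\sum_i n i * ln (expR (lam i)))%:E.
Proof.
move=> [_ feas].
have E : \sum_i n i * ln (expR (lam i)) = \sum_i lam i * n i.
  by apply: eq_bigr => i _; rewrite expRK mulrC.
rewrite E; apply/eqP; rewrite eq_le; apply/andP; split.
  apply: ereal_inf_lbound; exists (fun _ _ => 0).
    by move=> j i _ /=.
  rewrite lag_eq [X in _ + X]big1 ?addr0 // => j _; rewrite big1 // => i _.
  by rewrite /gg ltxx mulr0 subr0.
apply: le_ereal_inf_tmp => _ [m madm <-].
rewrite lee_fin lag_eq lerDl; apply: sumr_ge0 => j _.
apply: sum_gg_ge0 => //; exact: madm.
Qed.

Lemma dual_infeas lam : ~ dual_feasible r mu (fun i => expR (lam i)) ->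
  dual_fun r mu n lam = -oo%E.
Proof.
move=> nf.
have [j0 Hj0] : exists j, 1 < \sum_(i | j \in r i) expR (lam i) / mu j i.
  case: (pselect (exists j, 1 < \sum_(i | j \in r i) expR (lam i) / mu j i)) => // H.
  exfalso; apply: nf; split; first by move=> i; exact: ltW (expR_gt0 _).
  move=> j; rewrite leNgt; apply/negP => Hj; apply: H; by exists j.
set S := \sum_(i | j0 \in r i) expR (lam i) / mu j0 i in Hj0.
have lS : 0 < ln S by apply: ln_gt0.
have S0 : 0 < S by apply: lt_trans Hj0.
apply: eq_ninfty => x.
set A := \sum_i lam i * n i.
set t := (`|A| + `|x| + 1) / (S * ln S).
have t0 : 0 < t by rewrite /t divr_gt0 ?mulr_gt0 // ltr_pwDr // addr_ge0.
pose m := fun j i => if j == j0 then t * (expR (lam i) / mu j0 i) else 0.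
have madm : forall j i, j \in r i -> 0 <= m j i.
  move=> j i ji; rewrite /m; case: eqP => [E|_] //.
  by rewrite mulr_ge0 ?ltW // divr_gt0 ?expR_gt0 // mu_pos // -E.
apply: (@le_trans _ _ (lagrangian r mu n lam m)%:E).
  by apply: ereal_inf_lbound; exists m.
rewrite lee_fin.
have mj0 : forall i, m j0 i = t * (expR (lam i) / mu j0 i) by move=> i; rewrite /m eqxx.
have Mt : mtot r m j0 = t * S by rewrite /mtot mulr_sumr; apply: eq_bigr => i _; rewrite mj0.
have G : \sum_(i | j0 \in r i) gg lam m j0 i = - (t * S * ln S).
  rewrite -mulrA [S * _]mulrC mulrA mulr_sumr -sumrN; apply: eq_bigr => i ji.
  have mu0 := mu_pos _ _ ji.
  have q0 : 0 < expR (lam i) / mu j0 i by rewrite divr_gt0 ?expR_gt0.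
  rewrite /gg mj0 mulr_gt0 // Mt.
  have -> : t * (expR (lam i) / mu j0 i) * mu j0 i / (t * S) = expR (lam i) / S.
    by field; rewrite ?gt_eqF.
  rewrite lnM ?posrE ?expR_gt0 ?invr_gt0 // lnV ?posrE // expRK.
  ring.
rewrite lag_eq (bigD1 j0) //= G [X in _ + (_ + X)]big1 ?addr0; last first.
  move=> j jn; apply: big1 => i _; rewrite /gg /m (negbTE jn) ltxx mulr0 subr0 //.
have -> : t * S * ln S = `|A| + `|x| + 1.
  by rewrite /t; field; rewrite ?gt_eqF.
rewrite -/A.
have := ler_norm A; have := ler_norm (- x); rewrite normrN; lra.
Qed.

Hypothesis n_ge0 : forall i, 0 <= n i.

Lemma sup_eq :
  ereal_sup [set dual_fun r mu n lam | lam in [set: I -> R]] =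
  ereal_sup [set dual_objective n Lam | Lam in dual_feasible r mu].
Proof.
apply/eqP; rewrite eq_le; apply/andP; split.
  apply: ge_ereal_sup => _ [lam _ <-].
  case: (pselect (dual_feasible r mu (fun i => expR (lam i)))) => F; last first.
    by rewrite (dual_infeas _ F) leNye.
  rewrite dual_feas //; apply: ereal_sup_ubound; exists (fun i => expR (lam i)) => //.
  rewrite /dual_objective -sumEFin; apply: eq_bigr => i _.
  by rewrite gt_eqF ?expR_gt0 // EFinM.
apply: ge_ereal_sup => _ [L [L0 LF] <-].
apply/lee_addgt0Pr => e e0.
set N := \sum_i n i.
set C := \sum_j \sum_(i | j \in r i) (mu j i)^-1.
have N0 : 0 <= N by apply: sumr_ge0.
have C0 : 0 <= C.
  apply: sumr_ge0 => j _; apply: sumr_ge0 => i ji; by rewrite invr_ge0 ltW // mu_pos.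
set eps := e / (N * C + 1).
have NC1 : 0 < N * C + 1 by rewrite ltr_pwDr // mulr_ge0.
have eps0 : 0 < eps by rewrite divr_gt0.
have d0 : 0 < 1 + eps * C by rewrite ltr_pwDl // mulr_ge0 // ltW.
set L2 := fun i => (L i + eps) / (1 + eps * C).
have L20 : forall i, 0 < L2 i by move=> i; rewrite divr_gt0 // ltr_pwDr.
pose lam := fun i => ln (L2 i).
have eL : forall i, expR (lam i) = L2 i by move=> i; rewrite /lam lnK ?posrE.
have Flam : dual_feasible r mu (fun i => expR (lam i)).
  split; first by move=> i; rewrite eL ltW.
  move=> j; under eq_bigr => i _ do rewrite eL /L2.
  have Cj : \sum_(i | j \in r i) (mu j i)^-1 <= C.
    rewrite /C (bigD1 j) //= lerDl; apply: sumr_ge0 => k _; apply: sumr_ge0 => i ki.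
    by rewrite invr_ge0 ltW // mu_pos.
  have -> : \sum_(i | j \in r i) (L i + eps) / (1 + eps * C) / mu j i =
     (\sum_(i | j \in r i) L i / mu j i + eps * \sum_(i | j \in r i) (mu j i)^-1)
       / (1 + eps * C).
    rewrite [X in _ = (_ + X) / _]mulr_sumr -big_split /= mulr_suml; apply: eq_bigr => i ji.
    have := mu_pos _ _ ji => mu0.
    by field; rewrite ?gt_eqF.
  rewrite ler_pdivrMr // mul1r.
  have := LF j; have : eps * \sum_(i | j \in r i) (mu j i)^-1 <= eps * C.
    by rewrite ler_wpM2l // ltW.
  lra.
have Hsup : ((\sum_i n i * ln (expR (lam i)))%:E <=
   ereal_sup [set dual_fun r mu n lam | lam in [set: I -> R]])%E.
  by apply: ereal_sup_ubound; exists lam => //; rewrite dual_feas.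
have Hobj : (dual_objective n L <= (\sum_i n i * ln (L i + eps))%:E)%E.
  rewrite /dual_objective -sumEFin; apply: lee_sum => i _.
  case: eqP => [L0i|/eqP Lne].
    have [n0|np] := eqVneq (n i) 0; first by rewrite n0 mul0e mul0r.
    rewrite gt0_muleNy ?leNye // lte_fin lt_neqAle eq_sym np n_ge0 //.
  rewrite EFinM lee_fin; apply: ler_wpM2l => //.
  have Lp : 0 < L i by rewrite lt_neqAle eq_sym Lne L0.
  by rewrite ler_ln ?posrE ?ltr_pwDr // lerDl ltW.
have E2 : \sum_i n i * ln (L i + eps) =
    \sum_i n i * ln (expR (lam i)) + N * ln (1 + eps * C).
  rewrite /N mulr_suml -big_split /=; apply: eq_bigr => i _.
  rewrite eL -mulrDr; congr (_ * _).
  have -> : L i + eps = L2 i * (1 + eps * C) by rewrite /L2; field; rewrite gt_eqF.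
  by rewrite lnM ?posrE.
have B : N * ln (1 + eps * C) <= e.
  have l1 : ln (1 + eps * C) <= eps * C.
    by apply: le_ln1Dx; apply: lt_le_trans (mulr_ge0 (ltW eps0) C0).
  apply: le_trans (ler_wpM2l N0 l1) _.
  have -> : N * (eps * C) = e * (N * C) / (N * C + 1) by rewrite /eps; field; rewrite gt_eqF.
  rewrite ler_pdivrMr //; have := mulr_ge0 N0 C0; move: e0; nra.
apply: le_trans Hobj _; rewrite E2 EFinD; apply: leeD => //.

Qed.
End L.

Theorem lemma11 (R : realType) (J I : finType) (r : I -> {set J})
    (mu : J -> I -> R) (n : I -> R) :
  injective r ->
  (forall j i, j \in r i -> 0 < mu j i) ->
  (forall i, 0 <= n i) ->
  (* the dual function, with Lambda_i = exp(lambda_i) *)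
  (forall lam : I -> R,
     (dual_feasible r mu (fun i => expR (lam i)) ->
        dual_fun r mu n lam = (\sum_i n i * ln (expR (lam i)))%:E) /\
     (~ dual_feasible r mu (fun i => expR (lam i)) ->
        dual_fun r mu n lam = -oo%E)) /\
  (* the dual problem sup_lambda g(lambda) equals the Lambda-problem *)
  ereal_sup [set dual_fun r mu n lam | lam in [set: I -> R]] =
  ereal_sup [set dual_objective n Lam | Lam in dual_feasible r mu].
Proof.
move=> _ mu_pos n_ge0; split; last exact: sup_eq.
move=> lam; split; [exact: dual_feas | exact: dual_infeas].
Qed.
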